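(* Let $S_0$ be the initial state of a $d$-dimensional Hegselmann–Krause system with social network $G=(V,E)$, $n=|V|$ agents and confidence bound $\varepsilon>0$, evolving under uniform random asynchronous updates, and let $\delta>0$. Then the expected convergence time to a $\delta$-stable state is $\operatorname{O}(\Phi(S_0)\, n|E|/\delta^2)$, and this is at most $\operatorname{O}\big(n|E|^2(\varepsilon/\delta)^2\big)$.
   Context: A $d$-dimensional Hegselmann–Krause system (HKS) consists of a finite undirected graph $G=(V,E)$ (the social network) whose $n=|V|$ nodes are agents, a confidence bound $\varepsilon>0$, and initial opinions (positions) $x_v(0)\in\mathbb{R}^d$ for $v\in V$. A state is an assignment of positions $x_v\in\mathbb{R}^d$ to the agents. In a state, the influencing neighborhood of $v$ is $N_v=\{u\in V:\{u,v\}\in E,\ \|x_u-x_v\|_2\le\varepsilon\}\cup\{v\}$. The influence network is the graph $(V,E_I)$ with $E_I=\{\{u,v\}\in E:\|x_u-x_v\|_2\le\varepsilon\}$, and the length of an edge $\{u,v\}$ is $\|x_u-x_v\|_2$. Uniform random asynchronous updates: at each step $t=0,1,2,\dots$ one agent $v$ is chosen uniformly at random (independently of the past) and its position becomes $x_v(t+1)=\frac{1}{|N_v(t)|}\sum_{u\in N_v(t)}x_u(t)$, while all other agents keep their positions. A state is $\delta$-stable if every edge of the influence network has length at most $\delta$. The convergence time is the number of steps until a $\delta$-stable state is reached for the first time. The potential of a state $S$ is $\Phi(S)=\sum_{\{u,v\}\in E}\min\{\|x_u-x_v\|_2^2,\varepsilon^2\}$. The constants in the $\operatorname{O}$-notation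 are absolute (independent of $G$, $d$, $\varepsilon$, $\delta$ and the initial state). *)

(* Defs.v *)
From mathcomp Require Import all_boot all_order all_algebra.
Set Implicit Arguments. Unset Strict Implicit. Unset Printing Implicit Defensive.
Import Order.TTheory GRing.Theory Num.Theory.
Local Open Scope ring_scope.

Section HKS.
Variables (R : realFieldType) (V : finType) (d : nat).
Variable (E : rel V).
Variable (eps : R).

Definition state := V -> 'rV[R]_d.

Definition sqdist (a b : 'rV[R]_d) : R := \sum_(i < d) (a 0 i - b 0 i) ^+ 2.

Definition nbhd (x : state) (v : V) : {set V} :=
  [set u | (u == v) || (E u v && (sqdist (x u) (x v) <= eps ^+ 2))].

Definition step (x : state) (v : V) : state :=
  fun w => if w == v then (#|nbhd x v|%:R)^-1 *: \sum_(u in nbhd x v) x u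
           else x w.

Definition run (x0 : state) (s : seq V) : state := foldl step x0 s.

Definition stable (delta : R) (x : state) : bool :=
  [forall u, forall v, (E u v && (sqdist (x u) (x v) <= eps ^+ 2))
                        ==> (sqdist (x u) (x v) <= delta ^+ 2)].

Definition nedges : R := (#|[set p : V * V | E p.1 p.2]|%:R) / 2.

(* potential: each undirected edge counted once (ordered pairs / 2) *)
Definition potential (x : state) : R :=
  (\sum_(p : V * V | E p.1 p.2) Num.min (sqdist (x p.1) (x p.2)) (eps ^+ 2)) / 2.

(* Prob[convergence time T > t] under uniform random independent choices:
   the first t choices form a uniform t-tuple of agents, and T > t iff none of
   the states S_0, ..., S_t is delta-stable. *)
Definition prob_T_gt (delta : R) (x0 : state) (t : nat) : R :=
  (#|[set s : t.-tuple V |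
       [forall k : 'I_t.+1, ~~ stable delta (run x0 (take k s))]]|%:R)
  / (#|V|%:R ^+ t).

(* E[T] = sum_{t>=0} P(T > t); partial sums of this nonnegative series *)
Definition expected_time_partial (delta : R) (x0 : state) (N : nat) : R :=
  \sum_(t < N) prob_T_gt delta x0 t.

End HKS.

Arguments sqdist {R d}.
Arguments nbhd {R V d}.
Arguments step {R V d}.
Arguments run {R V d}.
Arguments stable {R V d}.
Arguments nedges {R V}.
Arguments potential {R V d}.
Arguments prob_T_gt {R V d}.
Arguments expected_time_partial {R V d}.

(* Main.v *)
Require Import Defs.
From mathcomp Require Import all_boot all_order all_algebra.
From mathcomp Require Import ring lra.
Import Order.TTheory GRing.Theory Num.Theory.
Local Open Scope ring_scope.

Section Proofs.
Variables (R : realFieldType) (V : finType) (d : nat) (E : rel V) (eps : R).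
Hypotheses (Esym : symmetric E) (Eirr : irreflexive E).

Local Notation st := (V -> 'rV[R]_d).

Lemma sqdistC (a b : 'rV[R]_d) : sqdist a b = sqdist b a.
Proof. by apply: eq_bigr => i _; rewrite -sqrrN opprB. Qed.

Lemma sqdist_ge0 (a b : 'rV[R]_d) : 0 <= sqdist a b.
Proof. by apply: sumr_ge0 => i _; rewrite sqr_ge0. Qed.

Lemma sqdist0 (a : 'rV[R]_d) : sqdist a a = 0.
Proof. by apply: big1 => i _; rewrite subrr expr0n. Qed.

Lemma nbhd_sym (x : st) u v : (u \in nbhd E eps x v) = (v \in nbhd E eps x u).
Proof. by rewrite !inE eq_sym Esym sqdistC. Qed.

Lemma nbhd_self (x : st) v : v \in nbhd E eps x v.
Proof. by rewrite inE eqxx. Qed.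

Definition Lc (x : st) v (i : 'I_d) : R :=
  \sum_(u in nbhd E eps x v) (x u 0 i - x v 0 i).

Definition dropv (x : st) v : R :=
  (\sum_i Lc x v i ^+ 2) / #|nbhd E eps x v|%:R.

Lemma dropv_ge0 x v : 0 <= dropv x v.
Proof.
by apply: divr_ge0; [apply: sumr_ge0 => i _; rewrite sqr_ge0|rewrite ler0n].
Qed.

Lemma card_nbhd_gt0 (x : st) v : 0 < #|nbhd E eps x v|%:R :> R.
Proof. by rewrite ltr0n card_gt0; apply/set0Pn; exists v; apply: nbhd_self. Qed.

Lemma step_coord (x : st) v i :
  step E eps x v v 0 i = x v 0 i + Lc x v i / #|nbhd E eps x v|%:R.
Proof.
rewrite /step eqxx mxE summxE /Lc sumrB sumr_const.
have := card_nbhd_gt0 x v; set n := #|_|%:R => hn.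
rewrite -[_ *+ _]mulr_natl -/n.
field; lra.
Qed.

Lemma step_other (x : st) v w : w != v -> step E eps x v w = x w.
Proof. by rewrite /step => /negbTE ->. Qed.

Lemma sq_identity (x : st) v :
  \sum_(b in nbhd E eps x v) (sqdist (step E eps x v v) (x b) - sqdist (x v) (x b))
  = - dropv x v.
Proof.
rewrite /dropv /sqdist.
have := card_nbhd_gt0 x v; set n := #|_|%:R => hn.
under eq_bigr => b _ do rewrite -sumrB.
rewrite exchange_big /= -mulNr -sumrN mulr_suml; apply: eq_bigr => i _.
rewrite step_coord.
set c := Lc x v i / n.
have -> : \sum_(b in nbhd E eps x v)
   ((x v 0 i + c - x b 0 i) ^+ 2 - (x v 0 i - x b 0 i) ^+ 2)
   = \sum_(b in nbhd E eps x v) (c ^+ 2 - 2 * c * (x b 0 i - x v 0 i)).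
  by apply: eq_bigr => b _; ring.
rewrite sumrB sumr_const -mulr_sumr -/(Lc x v i) -[_ *+ _]mulr_natl -/n /c.
field; lra.
Qed.

Definition G (x : st) a b : R :=
  if E a b then Num.min (sqdist (x a) (x b)) (eps ^+ 2) else 0.

Lemma potentialE (x : st) :
  potential E eps x = (\sum_a \sum_b G x a b) / 2.
Proof.
rewrite /potential; congr (_ / _).
rewrite pair_bigA big_mkcond; by apply: eq_bigr.
Qed.


Lemma potential_drop (x : st) v :
  potential E eps (step E eps x v) <= potential E eps x - dropv x v.
Proof.
set y := step E eps x v.
have hyo : forall w, w != v -> y w = x w by move=> w; apply: step_other.
set h := fun a b => G y a b - G x a b.
have h0 : forall a b, a != v -> b != v -> h a b = 0.
  by move=> a b av bv; rewrite /h /G !hyo // subrr.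
have hsym : forall a, h a v = h v a.
  by move=> a; rewrite /h /G Esym sqdistC (sqdistC (x a)).
have hvv : h v v = 0 by rewrite /h /G Eirr subrr.
have Hsum : \sum_a \sum_b h a b = 2 * \sum_b h v b.
  have e0 : \sum_(a | a != v) \sum_b h a b = \sum_(a | a != v) h a v.
    apply: eq_bigr => a hav.
    by rewrite (bigD1 v) //= big1 ?addr0 // => b hbv; exact: h0.
  have e1 : \sum_(a | a != v) h a v = \sum_a h v a.
    rewrite [in RHS](bigD1 v) //= hvv add0r.
    by apply: eq_bigr => a _; rewrite hsym.
  rewrite (bigD1 v) //= e0 e1; lra.
set D := fun b => sqdist (y v) (x b) - sqdist (x v) (x b).
have hb : forall b, h v b <=
    (if (b \in nbhd E eps x v) && (b != v) then D b else 0).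
  move=> b; case: (eqVneq b v) => [->|bv]; first by rewrite hvv andbF.
  rewrite /h /G (hyo b bv) inE (negbTE bv) /= andbT (Esym b v) (sqdistC (x b)).
  case: (E v b) => /=; last by rewrite subrr.
  have [hle|hle] := leP (sqdist (x v) (x b)) (eps ^+ 2).
    have m1 : Num.min (sqdist (y v) (x b)) (eps^+2) <= sqdist (y v) (x b).
      by rewrite ge_min lexx.
    have m2 : sqdist (x v) (x b) <= Num.min (sqdist (x v) (x b)) (eps^+2).
      by rewrite le_min lexx hle.
    rewrite /D; lra.
  have m1 : Num.min (sqdist (y v) (x b)) (eps^+2) <= eps ^+ 2.
    by rewrite ge_min lexx orbT.
  have m2 : eps ^+ 2 <= Num.min (sqdist (x v) (x b)) (eps^+2).
    by rewrite le_min lexx (ltW hle).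
  lra.
have H1 : \sum_b h v b <= \sum_(b in nbhd E eps x v | b != v) D b.
  by rewrite [in X in _ <= X]big_mkcond /=; apply: ler_sum => b _; apply: hb.
have H2 := sq_identity x v.
rewrite (bigD1 v) /= ?nbhd_self // in H2.
have H3 : 0 <= D v by rewrite /D sqdist0 subr0 sqdist_ge0.
have H4 : potential E eps y - potential E eps x = (\sum_a \sum_b h a b) / 2.
  rewrite !potentialE -mulrBl; congr (_ / _).
  rewrite -sumrB; apply: eq_bigr => a _; by rewrite -sumrB.
rewrite Hsum in H4.
have H5 : \sum_(b in nbhd E eps x v | b != v) D b = - dropv x v - D v.
  rewrite -H2 /D; lra.
lra.
Qed.

Lemma cs_vec (I : finType) (f g : I -> R) :
  (\sum_i f i * g i) ^+ 2 <= (\sum_i f i ^+ 2) * (\sum_i g i ^+ 2).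
Proof.
set A := \sum_i f i ^+ 2; set B := \sum_i g i ^+ 2; set C := \sum_i f i * g i.
have key : 0 <= B * (A * B - C ^+ 2).
  have -> : B * (A * B - C ^+ 2) = \sum_i (B * f i - C * g i) ^+ 2.
    transitivity (\sum_i (B ^+ 2 * f i ^+ 2 - 2 * B * C * (f i * g i)
                          + C ^+ 2 * g i ^+ 2)); last first.
      by apply: eq_bigr => i _; ring.
    rewrite big_split sumrB /= -!mulr_sumr -/A -/B -/C; ring.
  by apply: sumr_ge0 => i _; exact: sqr_ge0.
case: (eqVneq B 0) => hB0.
  have g0 : forall i, g i = 0.
    move=> i; apply/eqP; rewrite -sqrf_eq0; apply/eqP.
    by apply: (psumr_eq0P _ hB0) => // j _; exact: sqr_ge0.
  have -> : C = 0 by rewrite /C big1 // => i _; rewrite g0 mulr0.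
  by rewrite hB0 mulr0 expr0n.
have hBp : 0 < B.
  by rewrite lt_def hB0 /B; apply: sumr_ge0 => i _; exact: sqr_ge0.
by rewrite pmulr_rge0 // subr_ge0 in key.
Qed.

Lemma cs_weighted (I : finType) (a w : I -> R) :
  (forall i, 0 <= w i) -> (forall i, w i = 0 -> a i = 0) ->
  (\sum_i a i) ^+ 2 <= (\sum_i w i) * (\sum_i a i ^+ 2 / w i).
Proof.
move=> wge0 hwa.
set S := \sum_i w i; set T := \sum_i a i; set Q := \sum_i a i ^+ 2 / w i.
case: (eqVneq S 0) => hS.
  have w0 : forall i, w i = 0.
    by move=> i; apply: (psumr_eq0P _ hS) => // j _.
  have -> : T = 0 by rewrite /T big1 // => i _; rewrite hwa.
  by rewrite hS mul0r expr0n.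
have hSp : 0 < S by rewrite lt_def hS /S sumr_ge0.
have key : 0 <= \sum_i (a i ^+ 2 / w i - 2 * (T / S) * a i + (T / S) ^+ 2 * w i).
  apply: sumr_ge0 => i _; case: (eqVneq (w i) 0) => hw.
    by rewrite hw (hwa i hw) expr0n /= !(mul0r, mulr0, subrr, addr0).
  have hwp : 0 < w i by rewrite lt_def hw wge0.
  have -> : a i ^+ 2 / w i - 2 * (T / S) * a i + (T / S) ^+ 2 * w i
          = (a i - T / S * w i) ^+ 2 / w i.
    by field; rewrite hw hS.
  by apply: divr_ge0; [exact: sqr_ge0 | exact: ltW].
rewrite big_split sumrB /= -!mulr_sumr -/Q -/T -/S in key.
have := mulr_ge0 (ltW hSp) key.
have -> : S * (Q - 2 * (T / S) * T + (T / S) ^+ 2 * S) = S * Q - T ^+ 2.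
  by field.
lra.
Qed.

Definition nord : R := #|[set p : V * V | E p.1 p.2]|%:R.

Lemma sum_deg :
  \sum_z (#|[set y | E z y]|%:R : R) = nord.
Proof.
rewrite /nord -natr_sum; congr (_%:R).
rewrite -sum1dep_card.
under eq_bigr => z _ do rewrite -sum1dep_card.
by rewrite pair_big_dep.
Qed.

Lemma unstable_drop (delta : R) (x : st) : 0 < delta ->
  ~~ stable E eps delta x ->
  delta ^+ 2 <= 2 * nord * \sum_v dropv x v.
Proof.
move=> hd /forallPn [u /forallPn [w]].
rewrite negb_imply => /andP [/andP [Euw huw] hD].
rewrite -ltNge in hD.
set e := fun i => x w 0 i - x u 0 i.
set D := \sum_i e i ^+ 2.
have hDe : sqdist (x u) (x w) = D by rewrite sqdistC.
rewrite hDe in huw hD.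
have hD0 : 0 < D by apply: le_lt_trans hD; exact: sqr_ge0.
set f := fun z => \sum_i x z 0 i * e i.
have hfwu : f w - f u = D.
  by rewrite /D /f -sumrB; apply: eq_bigr => i _; rewrite /e; ring.
set A := fun z => f w <= f z.
set a := fun z => if A z then \sum_i Lc x z i * e i else 0.
have hLf : forall z, \sum_i Lc x z i * e i
                     = \sum_(y in nbhd E eps x z) (f y - f z).
  move=> z; rewrite /Lc.
  under eq_bigr => i _ do rewrite mulr_suml.
  rewrite exchange_big /=; apply: eq_bigr => y _.
  by rewrite /f -sumrB; apply: eq_bigr => i _; ring.
have C1 : \sum_z a z <= - D.
  set g1 := fun z y => if A z && A y && (y \in nbhd E eps x z)
                       then f y - f z else 0.
  set g2 := fun z y => if A z && ~~ A y && (y \in nbhd E eps x z)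
                       then f y - f z else 0.
  have ha : forall z, a z = \sum_y (g1 z y + g2 z y).
    move=> z; rewrite /a /g1 /g2; case: (A z) => /=; last first.
      by rewrite big1 // => y _; rewrite addr0.
    rewrite hLf big_mkcond /=; apply: eq_bigr => y _.
    by case: (A y); case: (y \in _) => /=; rewrite ?addr0 ?add0r.
  have anti : forall z y, g1 y z = - g1 z y.
    move=> z y; rewrite /g1 (nbhd_sym x z y).
    by case: (A z); case: (A y); case: (y \in _) => /=; rewrite ?oppr0 ?opprB.
  have T1 : \sum_z \sum_y g1 z y = 0.
    have e0 : \sum_z \sum_y g1 z y = - \sum_z \sum_y g1 z y.
      rewrite {1}exchange_big /= -sumrN; apply: eq_bigr => y _.
      by rewrite -sumrN; apply: eq_bigr => z _; rewrite anti.
    lra.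
  have g2le : forall z y, g2 z y <= 0.
    move=> z y; rewrite /g2 /A.
    case: (boolP (f w <= f z)) => hz //=; case: (boolP (f w <= f y)) => hy //=.
    case: (y \in _) => //=.
    rewrite -ltNge in hy.
    rewrite subr_le0; apply: ltW; exact: lt_le_trans hy hz.
  have T2 : \sum_z \sum_y g2 z y <= - D.
    have hwu : g2 w u = - D.
      rewrite /g2 /A lexx /= inE Euw hDe huw orbT andbT.
      have -> : (f w <= f u) = false by apply/negbTE; rewrite -ltNge; lra.
      by rewrite /=; lra.
    rewrite (bigD1 w) //= (bigD1 u) //= hwu.
    have s1 : \sum_(y | y != u) g2 w y <= 0 by apply: sumr_le0 => y _.
    have s2 : \sum_(z | z != w) \sum_y g2 z y <= 0.
      by apply: sumr_le0 => z _; apply: sumr_le0 => y _.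
    lra.
  have -> : \sum_z a z = \sum_z \sum_y g1 z y + \sum_z \sum_y g2 z y.
    rewrite -big_split /=; apply: eq_bigr => z _; by rewrite ha big_split.
  lra.
set deg := fun z => (#|[set y | E z y]|%:R : R).
set wt := fun z => if A z then 2 * deg z else 0.
have wge0 : forall z, 0 <= wt z.
  by move=> z; rewrite /wt; case: (A z) => //; rewrite mulr_ge0 ?ler0n.
have hwa : forall z, wt z = 0 -> a z = 0.
  move=> z; rewrite /wt /a; case: (A z) => //= h.
  have hdeg : deg z = 0 by lra.
  move: hdeg; rewrite /deg => /eqP; rewrite pnatr_eq0 cards_eq0 => /eqP h0.
  rewrite big1 // => i _.
  rewrite /Lc big1 ?mul0r // => y; rewrite inE => /orP [/eqP ->|/andP [Eyz _]].
    by rewrite subrr.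
  have : y \in [set y | E z y] by rewrite inE Esym.
  by rewrite h0 inE.
have Sw : \sum_z wt z <= 2 * nord.
  rewrite -sum_deg mulr_sumr; apply: ler_sum => z _.
  rewrite /wt; case: (A z) => //; by rewrite mulr_ge0 ?ler0n.
have C3 : forall z, a z ^+ 2 / wt z <= D * dropv x z.
  move=> z; case: (eqVneq (wt z) 0) => hw.
    by rewrite hw invr0 mulr0 mulr_ge0 ?dropv_ge0 // ltW.
  have hwp : 0 < wt z by rewrite lt_def hw wge0.
  have Az : A z by move: hw; rewrite /wt; case: (A z) => //; rewrite eqxx.
  have hdeg : deg z != 0 by move: hw; rewrite /wt Az mulf_eq0 negb_or => /andP [].
  have hn := card_nbhd_gt0 x z.
  have hNw : #|nbhd E eps x z|%:R <= wt z.
    rewrite /wt Az.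
    have h1 : (#|nbhd E eps x z| <= #|z |: [set y | E z y]|)%N.
      apply: subset_leq_card; apply/subsetP => y.
      rewrite !inE => /orP [->|/andP [Eyz _]] //; by rewrite Esym Eyz orbT.
    have h2 : (#|z |: [set y | E z y]| <= 1 + #|[set y | E z y]|)%N.
      by rewrite cardsU1 leq_add2r leq_b1.
    have h3 : 1 <= deg z.
      move: hdeg; rewrite /deg pnatr_eq0 => h; by rewrite ler1n lt0n.
    have h4 : (#|nbhd E eps x z|%:R : R) <= 1 + deg z.
      have -> : 1 + deg z = ((1 + #|[set y | E z y]|)%N)%:R :> R by rewrite natrD.
      by rewrite ler_nat (leq_trans h1 h2).
    lra.
  rewrite ler_pdivrMr //.
  have cs := cs_vec _ (fun i => Lc x z i) e.
  rewrite /= -/D in cs.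
  rewrite /a Az.
  apply: (le_trans cs).
  set S := \sum_i Lc x z i ^+ 2.
  have S0 : 0 <= S by apply: sumr_ge0 => i _; exact: sqr_ge0.
  rewrite /dropv -/S.
  have -> : D * (S / #|nbhd E eps x z|%:R) * wt z
          = (S * D) * (wt z / #|nbhd E eps x z|%:R) by rewrite mulrC; field; lra.
  apply: ler_peMr; first by rewrite mulr_ge0 // ltW.
  by rewrite ler_pdivlMr // mul1r.
have Sa : 0 <= \sum_z a z ^+ 2 / wt z.
  by apply: sumr_ge0 => z _; rewrite divr_ge0 ?sqr_ge0.
have CS := cs_weighted _ a wt wge0 hwa.
have Sd : \sum_z a z ^+ 2 / wt z <= D * \sum_v dropv x v.
  by rewrite mulr_sumr; apply: ler_sum => z _; apply: C3.
have k1 : D * D <= (\sum_z a z) ^+ 2.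
  rewrite -sqrrN expr2; apply: ler_pM; try lra.
have k2 : (\sum_z wt z) * (\sum_z a z ^+ 2 / wt z) <= (2 * nord) * (D * \sum_v dropv x v).
  apply: ler_pM => //; by apply: sumr_ge0 => z _.
have k3 : D * D <= (2 * nord * \sum_v dropv x v) * D.
  apply: (le_trans k1); apply: (le_trans CS); apply: (le_trans k2).
  by rewrite [D * _]mulrC mulrA.
rewrite ler_pM2r // in k3.
lra.
Qed.

Fixpoint alive (delta : R) (x : st) (s : seq V) : bool :=
  match s with
  | [::] => ~~ stable E eps delta x
  | v :: s' => ~~ stable E eps delta x && alive delta (step E eps x v) s'
  end.

Lemma alive_forall delta (s : seq V) : forall n x, size s = n ->
  [forall k : 'I_n.+1, ~~ stable E eps delta (run E eps x (take k s))]
  = alive delta x s.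
Proof.
elim: s => [|v s IH] n x /= hs.
  subst n; apply/forallP/idP => [H | H k].
    by have := H ord0.
  by case: k => [[|//] ?].
case: n hs => // n [hs].
apply/forallP/andP => [H | [H1 H2] k].
  split; first by have := H ord0.
  rewrite -(IH n (step E eps x v) hs); apply/forallP => j.
  by have := H (lift ord0 j); rewrite lift0.
case: (unliftP ord0 k) => [j ->|->].
  rewrite lift0 /=; rewrite -(IH n _ hs) in H2; exact: (forallP H2 j).
exact: H1.
Qed.

Definition cnt delta t x : R := \sum_(s : t.-tuple V) (alive delta x s)%:R.

Lemma prob_cnt delta x t :
  prob_T_gt E eps delta x t = cnt delta t x / #|V|%:R ^+ t.
Proof.
rewrite /prob_T_gt /cnt; congr (_ / _).
rewrite -sum1dep_card natr_sum big_mkcond /=; apply: eq_bigr => s _.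
by rewrite (alive_forall _ _ _ _ (size_tuple s)); case: alive.
Qed.

Lemma cnt0 delta x : cnt delta 0 x = (~~ stable E eps delta x)%:R.
Proof.
rewrite /cnt (eq_bigr (fun _ => (~~ stable E eps delta x)%:R)).
  by rewrite sumr_const card_tuple expn0.
by move=> s _; rewrite (tuple0 s).
Qed.

Lemma cntS delta t x : cnt delta t.+1 x =
  (~~ stable E eps delta x)%:R * \sum_v cnt delta t (step E eps x v).
Proof.
rewrite /cnt mulr_sumr.
rewrite (reindex (fun p : V * t.-tuple V => [tuple of p.1 :: p.2])) /=; last first.
  apply: onW_bij.
  exists (fun s : t.+1.-tuple V => (thead s, [tuple of behead s])).
    by move=> [a s] /=; rewrite theadE; congr pair; apply: val_inj.
  by move=> s /=; rewrite -tuple_eta.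
rewrite -(pair_bigA _ (fun a (s : t.-tuple V) => (alive delta x (a :: s))%:R)) /=.
apply: eq_bigr => v _; rewrite mulr_sumr; apply: eq_bigr => s _ /=.
by rewrite -natrM mulnb.
Qed.

Lemma potential_ge0 (x : st) : 0 <= potential E eps x.
Proof.
rewrite /potential divr_ge0 // sumr_ge0 // => p _.
by rewrite le_min sqdist_ge0 sqr_ge0.
Qed.

Lemma potential_le (x : st) : potential E eps x <= nedges E * eps ^+ 2.
Proof.
rewrite /potential /nedges mulrAC ler_pM2r ?invr_gt0 // -(sum1dep_card (fun p : V * V => E p.1 p.2)) natr_sum mulr_suml.
by apply: ler_sum => p _; rewrite mul1r ge_min lexx orbT.
Qed.

Lemma main_bound delta (hd : 0 < delta) N : forall x,
  \sum_(t < N) cnt delta t x / #|V|%:R ^+ t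
  <= potential E eps x * (2 * #|V|%:R * nord / delta ^+ 2).
Proof.
set n : R := #|V|%:R.
set K := 2 * n * nord / delta ^+ 2.
have hK : 0 <= K by rewrite /K /nord /n; apply: divr_ge0; [rewrite !mulr_ge0 ?ler0n // | exact: sqr_ge0].
elim: N => [|N IH] x.
  by rewrite big_ord0 mulr_ge0 ?potential_ge0.
rewrite big_ord_recl /= cnt0 expr0 divr1.
have hb0 : forall i, bump 0 i = i.+1 by move=> i; rewrite /bump leq0n.
under eq_bigr => i _ do rewrite hb0 cntS exprS.
case: (boolP (stable E eps delta x)) => hs.
  have z : (~~ true)%:R = 0 :> R by [].
  rewrite z add0r big1; first exact: mulr_ge0 (potential_ge0 x) hK.
  by move=> i _; rewrite mul0r mul0r.
have o : (~~ false)%:R = 1 :> R by [].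
rewrite o.
have hn : 0 < n.
  move: hs => /forallPn [u _]; rewrite /n ltr0n; apply/card_gt0P; by exists u.
set P := potential E eps x.
set Sd := \sum_v dropv x v.
have e1 : \sum_(i < N) 1 * (\sum_v cnt delta i (step E eps x v)) / (n * n ^+ i)
   = n^-1 * \sum_v \sum_(i < N) cnt delta i (step E eps x v) / n ^+ i.
  under eq_bigr => i _ do rewrite mul1r mulr_suml.
  rewrite exchange_big mulr_sumr; apply: eq_bigr => v _.
  rewrite mulr_sumr; apply: eq_bigr => i _.
  by rewrite invfM mulrCA.
rewrite e1.
have e2 : \sum_v \sum_(i < N) cnt delta i (step E eps x v) / n ^+ i
          <= (\sum_v potential E eps (step E eps x v)) * K.
  by rewrite mulr_suml; apply: ler_sum => v _; apply: IH.
have hsum : \sum_v potential E eps (step E eps x v) <= n * P - Sd.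
  have h : \sum_v potential E eps (step E eps x v) <= \sum_v (P - dropv x v).
    by apply: ler_sum => v _; apply: potential_drop.
  by rewrite sumrB sumr_const -mulr_natl in h.
have e3 : n^-1 * (\sum_v \sum_(i < N) cnt delta i (step E eps x v) / n ^+ i)
          <= n^-1 * ((n * P - Sd) * K).
  apply: ler_wpM2l; first by rewrite invr_ge0 ltW.
  apply: (le_trans e2); exact: ler_wpM2r.
have e4 : n^-1 * ((n * P - Sd) * K) = P * K - 2 * nord * Sd / delta ^+ 2.
  rewrite /K; field; rewrite ?gt_eqF ?exprn_gt0 //.
have hu := unstable_drop delta x hd hs.
have e5 : 1 <= 2 * nord * Sd / delta ^+ 2.
  by rewrite ler_pdivlMr ?exprn_gt0 // mul1r.
lra.
Qed.

End Proofs.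

Theorem theorem1 :
  exists C : nat,
  forall (R : realFieldType) (V : finType) (d : nat) (E : rel V)
         (eps delta : R) (x0 : V -> 'rV[R]_d),
    symmetric E -> irreflexive E ->
    0 < eps -> 0 < delta ->
    (forall N : nat,
       expected_time_partial E eps delta x0 N
         <= C%:R * (potential E eps x0 * #|V|%:R * nedges E / delta ^+ 2))
    /\
    potential E eps x0 * #|V|%:R * nedges E / delta ^+ 2
      <= C%:R * (#|V|%:R * nedges E ^+ 2 * (eps / delta) ^+ 2).
Proof.
exists 4%N => R V d E eps delta x0 Esym Eirr heps hd; split.
  move=> N; rewrite /expected_time_partial.
  under eq_bigr => t _ do rewrite prob_cnt.
  apply: le_trans (@main_bound R V d E eps Esym Eirr delta hd N x0) _.
  rewrite /nedges /nord.
  set P := potential E eps x0.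
  set c := (#|[set p : V * V | E p.1 p.2]|%:R : R).
  set n := (#|V|%:R : R).
  rewrite (_ : 4%:R * (P * n * (c / 2) / delta ^+ 2)
             = P * (2 * n * c / delta ^+ 2)) //.
  by field; rewrite gt_eqF // exprn_gt0.
set P := potential E eps x0.
set ne := nedges E.
set n := (#|V|%:R : R).
have hP : P <= ne * eps ^+ 2 by apply: potential_le.
have hP0 : 0 <= P by apply: potential_ge0.
have hM : 0 <= n * ne / delta ^+ 2.
  rewrite divr_ge0 ?sqr_ge0 // mulr_ge0 ?ler0n //.
  by rewrite /ne /nedges divr_ge0 ?ler0n.
have hne : 0 <= ne * eps ^+ 2.
  by apply: le_trans hP.
rewrite (_ : P * n * ne / delta ^+ 2 = P * (n * ne / delta ^+ 2)); last by rewrite !mulrA.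
rewrite (_ : 4%:R * (n * ne ^+ 2 * (eps / delta) ^+ 2)
           = 4%:R * ((ne * eps ^+ 2) * (n * ne / delta ^+ 2))); last first.
  by field; rewrite gt_eqF.
set M := n * ne / delta ^+ 2.
set Q := ne * eps ^+ 2.
have h1 : P * M <= Q * M by apply: ler_wpM2r.
have h2 : 0 <= Q * M by apply: mulr_ge0.
lra.
Qed.
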